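(* Let $S$ be oriented and let $(T,b)$ be a branched ideal triangulation of $(S,V)$. Let $\epsilon_{+}$ (resp. $\epsilon_-$) be the number of abstract triangles $t$ of $T$ with $*_{(t,b)}=+1$ (resp. $-1$). Then $\epsilon_+=\epsilon_-$.
   Context: $S$ is a compact closed connected oriented surface and $V\subset S$ is a finite set of marked points with $\chi(S)-|V|<0$. An ideal triangulation of $(S,V)$ is a possibly loose triangulation of $S$ with vertex set $V$. A branching $b$ orients all edges so that on each abstract triangle $t$ the orientations are induced by a total order $v_0<v_1<v_2$ of its vertices, edges pointing to the larger endpoint. The sign $*_{(t,b)}\in\{\pm1\}$ is $+1$ if the orientation of $t$ determined by the ordered triple $(v_0,v_1,v_2)$ agrees with the orientation of $S$, and $-1$ otherwise. Thus $\sum_t *_{(t,b)}(t,b)$ is the simplicial fundamental cycle of $S$. *)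

(* Defs.v *)
From HB Require Import structures.
From mathcomp Require Import all_boot all_order all_algebra all_fingroup.
Set Implicit Arguments. Unset Strict Implicit. Unset Printing Implicit Defensive.

(* Abstract triangles form a finite type [T].  Each triangle has corners
   0,1,2 : 'I_3, listed in the cyclic order given by the orientation of S.
   Side (t,i) is the side of t going from corner i to corner (i+1 mod 3),
   oriented as part of the boundary of t (with S's orientation).
   [glue] pairs the sides: a fixed-point-free involution.  Since S is oriented
   and all triangles carry the orientation of S, the gluing of side (t,i) to
   side glue (t,i) = (t',j) is orientation reversing: corner i of t is
   identified with corner j+1 of t', and corner i+1 of t with corner j of t'. *)

Definition side (T : finType) := (T * 'I_3)%type.

Definition is_gluing (T : finType) (glue : side T -> side T) : Prop :=
  involutive glue /\ (forall s, glue s != s).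

Definition glue_adj (T : finType) (glue : side T -> side T) : rel T :=
  fun t t' => [exists i : 'I_3, (glue (t, i)).1 == t'].

Definition glued_connected (T : finType) (glue : side T -> side T) : Prop :=
  forall t t' : T, connect (glue_adj glue) t t'.

(* A branching: for each triangle t, [b t : {perm 'I_3}] lists the corners
   in increasing order: v_k = corner (b t k), so v_0 < v_1 < v_2.
   The rank of corner c is (b t)^-1 c. *)
Definition rank (T : finType) (b : T -> {perm 'I_3}) (t : T) (c : 'I_3) : nat :=
  (b t)^-1%g c.

(* The edge induced on side (t,i) points to its larger endpoint; it agrees
   with the boundary orientation of t iff rank(corner i) < rank(corner i+1). *)
Definition side_forward (T : finType) (b : T -> {perm 'I_3}) (s : side T) : bool :=
  rank b s.1 s.2 < rank b s.1 (ordS s.2).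

(* Compatibility: the two sides glued into one edge of the triangulation
   induce the same orientation on that edge.  Since the gluing reverses
   boundary orientations, this means the forward flags are opposite. *)
Definition is_branching (T : finType) (glue : side T -> side T)
    (b : T -> {perm 'I_3}) : Prop :=
  forall s : side T, side_forward b (glue s) = ~~ side_forward b s.

(* *_(t,b) = +1 iff the orientation (v_0,v_1,v_2) agrees with that of S,
   i.e. iff (b t 0, b t 1, b t 2) is a cyclic rotation of (0,1,2),
   i.e. iff b t is an even permutation. *)
Definition star (T : finType) (b : T -> {perm 'I_3}) (t : T) : int :=
  if odd_perm (b t) then (-1)%R else 1%R.

(* Main.v *)
Require Import Defs.
From HB Require Import structures.
From mathcomp Require Import all_boot all_order all_algebra all_fingroup.
From mathcomp Require Import zify.
Definition o0 : 'I_3 := @Ordinal 3 0 isT.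
Definition o1 : 'I_3 := @Ordinal 3 1 isT.
Definition o2 : 'I_3 := @Ordinal 3 2 isT.
Lemma ord3 (i : 'I_3) : [\/ i = o0, i = o1 | i = o2].
Proof. case: i => [[|[|[|]]] //] H; [constructor 1|constructor 2|constructor 3]; exact: val_inj. Qed.
Lemma third (a b c d : 'I_3) :
  [&& a != b, c != a, c != b, d != a & d != b] -> c = d.
Proof. by case: (ord3 a)=>->; case: (ord3 b)=>->; case: (ord3 c)=>->; case: (ord3 d)=>->. Qed.
Lemma perm_eq01 (q p : {perm 'I_3}) : q o0 = p o0 -> q o1 = p o1 -> q = p.
Proof.
move=> h0 h1; apply/permP => i.
case: (ord3 i) => -> //.
apply: (@third (q o0) (q o1)); rewrite {3}h0 {3}h1 !(inj_eq perm_inj).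
by [].
Qed.
Lemma tpermE (T : finType) (x y z : T) : tperm x y z = if z == x then y else if z == y then x else z.
Proof. by case: tpermP => [->|->|/eqP/negbTE->/eqP/negbTE->]; rewrite ?eqxx //; case: eqP => // ->. Qed.
Lemma cnt (q : {perm 'I_3}) :
  (\sum_(i < 3) (q i < q (ordS i)) = if odd_perm q then 1 else 2)%N.
Proof.
have E: forall p : {perm 'I_3}, (\sum_(i < 3) (p i < p (ordS i)) = (p o0 < p o1) + (p o1 < p o2) + (p o2 < p o0))%N.
  move=> p; rewrite !big_ord_recr big_ord0 /=.
  rewrite (_ : ordS (widen_ord _ (widen_ord _ ord_max)) = o1); last exact: val_inj.
  rewrite (_ : ordS (widen_ord _ ord_max) = o2); last exact: val_inj.
  rewrite (_ : widen_ord _ (widen_ord _ ord_max) = o0); last exact: val_inj.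
  rewrite (_ : widen_ord _ ord_max = o1); last exact: val_inj.
  rewrite (_ : ord_max = o2); last exact: val_inj.
  rewrite (_ : ordS o2 = o0); last exact: val_inj. by rewrite add0n.
rewrite E.
have inj := @perm_inj _ q.
have cands : forall P : {perm 'I_3}, q = P -> ((P o0 < P o1) + (P o1 < P o2) + (P o2 < P o0) = if odd_perm P then 1 else 2)%N ->
   ((q o0 < q o1) + (q o1 < q o2) + (q o2 < q o0) = if odd_perm q then 1 else 2)%N.
  by move=> P ->.
case: (ord3 (q o0)) => h0; case: (ord3 (q o1)) => h1;
  try (by have /inj := etrans h0 (esym h1));
  first [ apply: (cands 1%g); [apply: perm_eq01; by rewrite ?h0 ?h1 perm1 | by rewrite odd_perm1 !perm1]
        | apply: (cands (tperm o0 o1)); [apply: perm_eq01; by rewrite ?h0 ?h1 !tpermE | by rewrite odd_tperm !tpermE]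
        | apply: (cands (tperm o1 o2)); [apply: perm_eq01; by rewrite ?h0 ?h1 !tpermE | by rewrite odd_tperm !tpermE]
        | apply: (cands (tperm o0 o2)); [apply: perm_eq01; by rewrite ?h0 ?h1 !tpermE | by rewrite odd_tperm !tpermE]
        | apply: (cands (tperm o0 o1 * tperm o1 o2)%g); [apply: perm_eq01; by rewrite ?h0 ?h1 !permM !tpermE | by rewrite odd_permM !odd_tperm !permM !tpermE]
        | apply: (cands (tperm o1 o2 * tperm o0 o1)%g); [apply: perm_eq01; by rewrite ?h0 ?h1 !permM !tpermE | by rewrite odd_permM !odd_tperm !permM !tpermE] ].
Qed.

Lemma card_cnt (T : finType) (P : pred T) : #|[set t | P t]| = (\sum_t P t)%N.
Proof. by rewrite -sum1_card big_mkcond /=; apply: eq_bigr => t _; rewrite inE; case: (P t). Qed.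

Theorem lemma2p1 (T : finType) (glue : side T -> side T)
    (Hglue : is_gluing glue) (Hconn : glued_connected glue)
    (Hne : 0 < #|T|)
    (b : T -> {perm 'I_3}) (Hb : is_branching glue b) :
  #|[set t : T | star b t == 1%R]| = #|[set t : T | star b t == (-1)%R]|.
Proof.
have e1 : forall t, (star b t == 1%R) = ~~ odd_perm (b t).
  by move=> t; rewrite /star; case: (odd_perm (b t)).
have e2 : forall t, (star b t == (-1)%R) = odd_perm (b t).
  by move=> t; rewrite /star; case: (odd_perm (b t)).
rewrite !card_cnt (eq_bigr (fun t => (~~ odd_perm (b t) : nat)) (fun t _ => congr1 nat_of_bool (e1 t))).
rewrite (eq_bigr (fun t => (odd_perm (b t) : nat)) (fun t _ => congr1 nat_of_bool (e2 t))).
have ginj : injective glue by apply: inv_inj; case: Hglue.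
have S1 : (\sum_(s : side T) side_forward b s = \sum_(s : side T) ~~ side_forward b s)%N.
  rewrite (reindex_inj ginj) /=; apply: eq_bigr => s _; by rewrite Hb.
have P1 : forall f : side T -> bool, (\sum_(s : side T) f s = \sum_t \sum_(i<3) f (t, i))%N.
  by move=> f; rewrite pair_bigA; apply: eq_bigr => -[].
rewrite (P1 (side_forward b)) (P1 (fun s => ~~ side_forward b s)) /= in S1.
have F1 : forall t, (\sum_(i < 3) side_forward b (t, i) = if odd_perm (b t) then 1 else 2)%N.
  move=> t; rewrite -odd_permV -cnt; apply: eq_bigr => i _; by [].
have F2 : forall t, (\sum_(i < 3) ~~ side_forward b (t, i) = if odd_perm (b t) then 2 else 1)%N.
  move=> t; have := F1 t.
  have H3 : (\sum_(i < 3) side_forward b (t, i) + \sum_(i < 3) ~~ side_forward b (t, i) = 3)%N.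
    rewrite -big_split /=.
    by rewrite (eq_bigr (fun _ => 1%N)) ?sum1_card ?card_ord // => i _; case: side_forward.
  case: odd_perm => H; rewrite H in H3; lia.
rewrite (eq_bigr _ (fun t _ => F1 t)) (eq_bigr _ (fun t _ => F2 t)) in S1.
have G1 : (\sum_t (if odd_perm (b t) then 1 else 2) = \sum_t odd_perm (b t) + 2 * \sum_t ~~ odd_perm (b t))%N.
  rewrite big_distrr -big_split /=; apply: eq_bigr => t _; by case: odd_perm.
have G2 : (\sum_t (if odd_perm (b t) then 2 else 1) = 2 * \sum_t odd_perm (b t) + \sum_t ~~ odd_perm (b t))%N.
  rewrite big_distrr -big_split /=; apply: eq_bigr => t _; by case: odd_perm.
rewrite G1 G2 in S1. lia.
Qed.
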